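(* Let $p\ge 2$ and let $J$ be a periodic Jacobi operator on $\ell^2(\mathbb{Z})$ with period $p$, given by $(J\psi)_n=a_{n-1}\psi_{n-1}+b_n\psi_n+a_n\psi_{n+1}$, where $a_n>0$, $b_n\in\mathbb{R}$, $a_{n+p}=a_n$, $b_{n+p}=b_n$ for all $n$. Let $A:=(a_1\cdots a_p)^{1/p}$, and let $\sigma_n$ ($1\le n\le p$) and $\gamma_n$ ($1\le n\le p-1$) be the spectral bands and gaps of $J$. If $$4\min_{1\le n\le p-1}|\gamma_n|\ge\max\Big\{\max_{1\le n\le p}|\sigma_n|,\;4A\Big\},$$ then $$\min_{1\le n\le p}|\sigma_n|\le\frac{4A^p}{\big(\min_{1\le n\le p-1}|\gamma_n|\big)^{p-1}}.$$
   Context: Spectral structure: the spectrum of $J$ is $\sigma(J)=\{\lambda\in\mathbb{R}: |\Delta(\lambda)|\le 2\}$, where $\Delta(\lambda)=\operatorname{tr}\big(A_p(\lambda)A_{p-1}(\lambda)\cdots A_1(\lambda)\big)$ with $A_n(\lambda)=\begin{pmatrix}(\lambda-b_n)/a_n & -a_{n-1}/a_n\\ 1&0\end{pmatrix}$ (the discriminant, a real polynomial of degree $p$). It is a standard fact that this set is a union of $p$ closed intervals (bands) $\sigma_n=[\lambda_n^{\min},\lambda_n^{\max}]$, $1\le n\le p$, with $\lambda_n^{\min}<\lambda_n^{\max}\le\lambda_{n+1}^{\min}$ (bands may touch but do not overlap); on each band $\Delta$ is monotone and maps it onto $[-2,2]$. The spectral gaps are $\gamma_n=(\lambda_n^{\max},\lambda_{n+1}^{\min})$,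 $1\le n\le p-1$ (possibly empty). $|\cdot|$ denotes Lebesgue measure (length). *)

(* Defs.v *)
From HB Require Import structures.
From mathcomp Require Import all_boot all_order all_algebra.
From mathcomp Require Import reals exp.
Set Implicit Arguments. Unset Strict Implicit. Unset Printing Implicit Defensive.
Import Order.TTheory GRing.Theory Num.Theory.
Local Open Scope ring_scope.

Section Jacobi.
Variable R : realType.
Implicit Types (a b : int -> R) (x : R).

Definition transfer a b (n : nat) x : 'M[R]_2 :=
  \matrix_(i < 2, j < 2)
    if (i : nat) == 0%N then
      (if (j : nat) == 0%N then (x - b n%:Z) / a n%:Z
       else - (a (n%:Z - 1)) / a n%:Z)
    else (if (j : nat) == 0%N then 1 else 0).

Fixpoint monodromy a b (n : nat) x : 'M[R]_2 :=
  match n with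
  | 0%N => 1%:M
  | k.+1 => transfer a b k.+1 x *m monodromy a b k x
  end.

Definition discriminant a b (p : nat) x : R := \tr (monodromy a b p x).

Definition jacobi_spectrum a b (p : nat) (x : R) : Prop :=
  `|discriminant a b p x| <= 2.

Definition band_edges a b (p : nat) (lmin lmax : nat -> R) : Prop :=
  [/\ (forall n, (1 <= n <= p)%N -> lmin n < lmax n),
      (forall n, (1 <= n < p)%N -> lmax n <= lmin n.+1),
      (forall x, jacobi_spectrum a b p x <->
         exists2 n, (1 <= n <= p)%N & lmin n <= x <= lmax n),
      (forall n, (1 <= n <= p)%N ->
         (forall x y, lmin n <= x -> x <= y -> y <= lmax n ->
            discriminant a b p x <= discriminant a b p y) \/
         (forall x y, lmin n <= x -> x <= y -> y <= lmax n ->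
            discriminant a b p y <= discriminant a b p x)) &
      (forall n, (1 <= n <= p)%N -> forall y, -2 <= y <= 2 ->
         exists2 x, lmin n <= x <= lmax n & discriminant a b p x = y)].

(* |sigma_n| and |gamma_n| (Lebesgue measure; an empty gap has length 0) *)
Definition band_len (lmin lmax : nat -> R) (n : nat) : R := lmax n - lmin n.
Definition gap_len (lmin lmax : nat -> R) (n : nat) : R := lmin n.+1 - lmax n.

Definition min_band (p : nat) (lmin lmax : nat -> R) : R :=
  \big[Num.min/band_len lmin lmax 1]_(1 <= n < p.+1) band_len lmin lmax n.
Definition max_band (p : nat) (lmin lmax : nat -> R) : R :=
  \big[Num.max/band_len lmin lmax 1]_(1 <= n < p.+1) band_len lmin lmax n.
Definition min_gap (p : nat) (lmin lmax : nat -> R) : R :=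
  \big[Num.min/gap_len lmin lmax 1]_(1 <= n < p) gap_len lmin lmax n.

Definition geom_mean a (p : nat) : R :=
  powR (\prod_(1 <= n < p.+1) a n%:Z) (p%:R^-1).

End Jacobi.

(* Main.v *)
Require Import Defs.
From HB Require Import structures.
From mathcomp Require Import all_boot all_order all_algebra.
From mathcomp Require Import reals exp boolp.
From mathcomp Require Import ring lra zify.
Import Order.TTheory GRing.Theory Num.Theory.
Local Open Scope ring_scope.

Section Poly.
Variable R : realType.
Variables a b : int -> R.
Hypothesis apos : forall n : int, 0 < a n.

Definition linP (k : nat) : {poly R} := (a k%:Z)^-1 *: ('X - (b k%:Z)%:P).
Definition cfP (k : nat) : R := a (k%:Z - 1) / a k%:Z.

Fixpoint recP (s0 s1 : {poly R}) (k : nat) : {poly R} * {poly R} :=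
  match k with
  | 0%N => (s0, s1)
  | k'.+1 => let: (x, y) := recP s0 s1 k' in
             (y, linP k'.+1 * y - cfP k'.+1 *: x)
  end.

Lemma recP_S s0 s1 k :
  recP s0 s1 k.+1 = ((recP s0 s1 k).2,
     linP k.+1 * (recP s0 s1 k).2 - cfP k.+1 *: (recP s0 s1 k).1).
Proof. by rewrite /=; case: (recP s0 s1 k). Qed.

Definition Upol k := recP 0 1 k.
Definition Vpol k := recP 1 0 k.

Lemma monodromy_eval k x :
  monodromy a b k x = \matrix_(i < 2, j < 2)
    (if (i : nat) == 0%N then
      (if (j : nat) == 0%N then (Upol k).2.[x] else (Vpol k).2.[x])
     else (if (j : nat) == 0%N then (Upol k).1.[x] else (Vpol k).1.[x])).
Proof.
elim: k => [|k IH].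
  apply/matrixP => i j; rewrite !mxE /Upol /Vpol /= !hornerE.
  by case: i => -[|[|//]] ?; case: j => -[|[|//]] ?.
rewrite /= IH; apply/matrixP => i j.
rewrite !mxE !big_ord_recl big_ord0 !mxE /= /Upol /Vpol !recP_S /=.
rewrite /linP /cfP !hornerE /=.
case: i => -[|[|//]] ?; case: j => -[|[|//]] ? /=.
all: by rewrite ?mul1r ?mul0r ?addr0 //; ring.
Qed.

Definition DiscP p := (Upol p).2 + (Vpol p).1.

Lemma discP_eval p x : discriminant a b p x = (DiscP p).[x].
Proof.
rewrite /discriminant monodromy_eval /mxtrace !big_ord_recl big_ord0 !mxE /=.
by rewrite hornerD addr0.
Qed.

Lemma size_linP k : size (linP k) = 2%N.
Proof.
by rewrite /linP size_scale ?size_XsubC // invr_eq0 gt_eqF.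
Qed.

Lemma lead_linP k : lead_coef (linP k) = (a k%:Z)^-1.
Proof. by rewrite /linP lead_coefZ lead_coefXsubC mulr1. Qed.

Lemma Upol_size k : (size (Upol k).1 <= k)%N /\ size (Upol k).2 = k.+1 /\
  lead_coef (Upol k).2 = \prod_(1 <= j < k.+1) (a j%:Z)^-1.
Proof.
elim: k => [|k [IH1 [IH2 IH3]]].
  by rewrite /Upol /= size_poly0 size_poly1 lead_coef1 big_geq.
rewrite /Upol recP_S /=; rewrite -/(Upol k).
have nz2 : (Upol k).2 != 0 by rewrite -size_poly_eq0 IH2.
have nzl : linP k.+1 != 0 by rewrite -size_poly_eq0 size_linP.
have sM : size (linP k.+1 * (Upol k).2) = k.+2.
  by rewrite size_mul // size_linP IH2.
have sS : (size (cfP k.+1 *: (Upol k).1) < k.+2)%N.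
  by apply: (leq_ltn_trans (size_scale_leq _ _)); apply: (leq_trans IH1).
split; first by rewrite IH2.
split; first by rewrite size_polyDl ?size_polyN sM.
rewrite lead_coefDl ?size_polyN ?sM // lead_coefM lead_linP IH3.
by rewrite [RHS]big_nat_recr //= mulrC.
Qed.

Lemma Vpol_size k : (1 <= k)%N -> (size (Vpol k).1 <= k.-1)%N /\ (size (Vpol k).2 <= k)%N.
Proof.
elim: k => [//|k IH] _.
case: k IH => [|k] IH.
  rewrite /Vpol /= mulr0 add0r size_polyN; split; first by rewrite size_poly0.
  by apply: (leq_trans (size_scale_leq _ _)); rewrite size_poly1.
have [IH1 IH2] := IH isT.
rewrite /Vpol recP_S /= -/(Vpol k.+1); split => //.
rewrite (leq_trans (size_polyD _ _)) // geq_max size_polyN.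
rewrite (leq_trans (size_scale_leq _ _)) ?andbT; last by apply: (leq_trans IH1); rewrite /=; lia.
rewrite (leq_trans (size_polyMleq _ _)) // size_linP /=.
move: IH2; rewrite /Vpol /=; lia.
Qed.

Lemma DiscP_size p : (1 <= p)%N -> size (DiscP p) = p.+1 /\
  lead_coef (DiscP p) = \prod_(1 <= j < p.+1) (a j%:Z)^-1.
Proof.
move=> p1; have [_ [U2 U3]] := Upol_size p; have [V1 _] := Vpol_size p p1.
have lt : (size (Vpol p).1 < size (Upol p).2)%N by rewrite U2; apply: (leq_ltn_trans V1); lia.
by rewrite /DiscP size_polyDl // lead_coefDl.
Qed.
End Poly.

Lemma bigmin_le (R : realType) (F : nat -> R) idx lo hi m :
  (lo <= m < hi)%N -> \big[Num.min/idx]_(lo <= i < hi) F i <= F m.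
Proof.
move=> /andP[lom]; move: (m - lo)%N (subnKC lom) => d <- {lom}.
elim: d lo => [|d IH] lo mh.
  have E : (lo + 0)%N = lo by lia.
  by rewrite E in mh *; rewrite big_ltn // ge_min lexx.
rewrite big_ltn; last by move: mh; lia.
have E : (lo + d.+1)%N = (lo.+1 + d)%N by lia.
by rewrite E in mh *; rewrite ge_min IH ?orbT.
Qed.

Lemma lmin_chain (R : realType) (lmin lmax : nat -> R) p :
  (forall n, (1 <= n <= p)%N -> lmin n < lmax n) ->
  (forall n, (1 <= n < p)%N -> lmax n <= lmin n.+1) ->
  forall k j, (1 <= j)%N -> (j + k <= p)%N -> lmin j <= lmin (j + k)%N.
Proof.
move=> Hlt Hle; elim=> [|k IH] j j1 jk; first by rewrite addn0.
apply: (le_trans (IH j j1 _)); first by lia.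
rewrite addnS; apply: le_trans (Hle _ _); last by lia.
by apply/ltW/Hlt; lia.
Qed.

Lemma sep_aux (R : realType) (lmin lmax : nat -> R) p g (rr : nat -> R) :
  (forall n, (1 <= n <= p)%N -> lmin n < lmax n) ->
  (forall n, (1 <= n < p)%N -> lmax n <= lmin n.+1) ->
  (forall n, (1 <= n < p)%N -> lmax n + g <= lmin n.+1) ->
  (forall m, (1 <= m <= p)%N -> lmin m <= rr m <= lmax m) ->
  forall m m', (1 <= m)%N -> (m < m')%N -> (m' <= p)%N -> rr m + g <= rr m'.
Proof.
move=> Hlt Hle Hgap Hrr m m' h1 h2 h3.
have /andP[_ A1] := Hrr m ltac:(lia).
have /andP[A2 _] := Hrr m' ltac:(lia).
have A3 := Hgap m ltac:(lia).
have A4 := @lmin_chain R lmin lmax p Hlt Hle (m' - m.+1)%N m.+1 isT ltac:(lia).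
have E : (m.+1 + (m' - m.+1))%N = m' by lia.
rewrite E in A4; lra.
Qed.

Lemma sep_aux2 (R : realType) (lmin lmax : nat -> R) p g (rr : nat -> R) :
  (forall n, (1 <= n <= p)%N -> lmin n < lmax n) ->
  (forall n, (1 <= n < p)%N -> lmax n <= lmin n.+1) ->
  (forall n, (1 <= n < p)%N -> lmax n + g <= lmin n.+1) ->
  (forall m, (1 <= m <= p)%N -> lmin m <= rr m <= lmax m) ->
  forall m m', (1 <= m)%N -> (m < m')%N -> (m' <= p)%N -> lmax m + g <= rr m'.
Proof.
move=> Hlt Hle Hgap Hrr m m' h1 h2 h3.
have /andP[A2 _] := Hrr m' ltac:(lia).
have A3 := Hgap m ltac:(lia).
have A4 := @lmin_chain R lmin lmax p Hlt Hle (m' - m.+1)%N m.+1 isT ltac:(lia).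
have E : (m.+1 + (m' - m.+1))%N = m' by lia.
rewrite E in A4; lra.
Qed.

Lemma core (R : realType) (p : nat) (g P bl e f : R) (D : {poly R}) (rr : nat -> R) :
  (2 <= p)%N -> 0 < g -> 0 < P -> size D = p.+1 -> lead_coef D = P^-1 ->
  D.[e] = -2 -> rr 1%N = f -> bl <= `|e - f| -> 0 <= bl ->
  (forall m, (1 <= m <= p)%N -> D.[rr m] = 2) ->
  (forall m m' : nat, (1 <= m)%N -> (m < m')%N -> (m' <= p)%N -> rr m + g <= rr m') ->
  (forall m, (2 <= m <= p)%N -> e + g <= rr m) ->
  bl <= 4 * P / g ^+ p.-1.
Proof.
move=> p2 g0 P0 sD lD De rr1 ef b0 Droot Hsep Hlow.
pose rs := [seq rr m | m <- index_iota 1 p.+1].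
have Urs : uniq rs.
  rewrite map_inj_in_uniq ?iota_uniq // => m m' hm hm' E.
  move: hm hm'; rewrite !mem_index_iota => hm hm'.
  case: (ltngtP m m') => // hmm.
    have := Hsep m m' ltac:(lia) hmm ltac:(lia).
    by rewrite E gerDl leNgt g0.
  have := Hsep m' m ltac:(lia) hmm ltac:(lia).
  by rewrite E gerDl leNgt g0.
have Srs : size rs = p by rewrite size_map size_iota subSS subn0.
pose Q := D - 2%:P.
have sQlt : (size (- (2%:P : {poly R})) < size D)%N.
  by rewrite size_polyN sD; apply: (leq_ltn_trans (size_polyC_leq1 _)); lia.
have sQ : size Q = (size rs).+1 by rewrite /Q size_polyDl // sD Srs.
have lQ : lead_coef Q = P^-1 by rewrite /Q lead_coefDl.
have rQ : all (root Q) rs.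
  apply/allP => x /mapP [m hm ->]; move: hm; rewrite mem_index_iota => hm.
  by rewrite /root hornerD hornerN hornerC Droot // subrr.
have fact := all_roots_prod_XsubC sQ rQ ltac:(by rewrite uniq_rootsE).
have := congr1 (fun q => q.[e]) fact.
rewrite hornerZ horner_prod /= {1}/Q hornerD hornerN hornerC De lQ big_map.
under eq_bigr do rewrite hornerXsubC.
rewrite big_ltn; last lia.
rewrite rr1 => E4.
set X := \prod_(2 <= i < p.+1) (e - rr i) in E4.
have GX : g ^+ p.-1 <= `|X|.
  have -> : p.-1 = (p.+1 - 2)%N by lia.
  rewrite /X normr_prod -(@prodr_const_nat _ 2 p.+1 g).
  rewrite [X in _ <= X]big_nat_cond [X in X <= _]big_nat_cond.
  apply: ler_prod => i /andP[/andP[hi1 hi2] _].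
  have := Hlow i ltac:(lia).
  move=> G1; rewrite (ltW g0) /= distrC ger0_norm; lra.
have N4 : 4 = P^-1 * (`|e - f| * `|X|).
  have := congr1 (fun x => `|x|) E4; rewrite /= !normrM (ger0_norm (x:=P^-1)).
    move=> <-; have -> : -2 - 2 = - 4 :> R by lra.
    by rewrite normrN ger0_norm.
  by rewrite invr_ge0 ltW.
have gp : 0 < g ^+ p.-1 by apply: exprn_gt0.
rewrite ler_pdivlMr //.
have : 4 * P = `|e - f| * `|X|.
  by rewrite N4 mulrC mulrA mulrV ?unitfE ?gt_eqF // mul1r.
move: ef GX b0 gp; set d := `|e - f|; set x := `|X|; set G := g ^+ p.-1.
move=> ef GX b0 gp ->.
have d0 : 0 <= d by rewrite /d normr_ge0.
nra.
Qed.

Theorem corollary1p4 (R : realType) (p : nat) (a b : int -> R)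
    (lmin lmax : nat -> R) :
  (2 <= p)%N ->
  (forall n : int, 0 < a n) ->
  (forall n : int, a (n + p%:Z) = a n) ->
  (forall n : int, b (n + p%:Z) = b n) ->
  band_edges a b p lmin lmax ->
  Num.max (max_band p lmin lmax) (4 * geom_mean a p) <= 4 * min_gap p lmin lmax ->
  min_band p lmin lmax <=
    4 * geom_mean a p ^+ p / min_gap p lmin lmax ^+ p.-1.
Proof.
move=> p2 apos _ _ [Hlt Hle Hspec Hmono Hsurj] Hmax.
set g := min_gap p lmin lmax.
set A := geom_mean a p.
set P := \prod_(1 <= n < p.+1) a n%:Z.
have P0 : 0 < P by apply: prodr_gt0 => n _; apply: apos.
have A0 : 0 < A by apply: powR_gt0.
have AP : A ^+ p = P.
  rewrite -powR_mulrn ?ltW // /A /geom_mean -powRrM mulVf ?powRr1 ?ltW //.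
  by rewrite pnatr_eq0; lia.
have gA : A <= g.
  move: Hmax; rewrite ge_max => /andP[_ H4].
  by rewrite -/A -/g in H4; lra.
have g0 : 0 < g by apply: (lt_le_trans A0 gA).
have Hgap : forall n, (1 <= n < p)%N -> lmax n + g <= lmin n.+1.
  move=> n hn; have := @bigmin_le _ (gap_len lmin lmax) (gap_len lmin lmax 1) _ _ _ hn.
  by rewrite -/(min_gap p lmin lmax) -/g /gap_len; lra.
have Hmb : min_band p lmin lmax <= band_len lmin lmax 1.
  by apply: bigmin_le; lia.
pose D := @DiscP R a b p.
have HD : forall x, discriminant a b p x = D.[x] by move=> x; apply: (@discP_eval R).
have [e [f [he [hf [De [Df ef]]]]]] : exists e f, (lmin 1 <= e <= lmax 1) /\
   (lmin 1 <= f <= lmax 1) /\ discriminant a b p e = -2 /\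
   discriminant a b p f = 2 /\ band_len lmin lmax 1 <= `|e - f|.
  have h1 : (1 <= 1 <= p)%N by lia.
  have l1 := Hlt 1%N h1.
  have [xm hxm Dxm] := Hsurj 1%N h1 (-2) ltac:(lra).
  have [xp hxp Dxp] := Hsurj 1%N h1 2 ltac:(lra).
  have s0 : `|discriminant a b p (lmin 1)| <= 2.
    by apply/Hspec; exists 1%N => //; rewrite lexx ltW.
  have s1 : `|discriminant a b p (lmax 1)| <= 2.
    by apply/Hspec; exists 1%N => //; rewrite lexx ltW.
  move: s0 s1; rewrite !ler_norml => /andP[s0 s0'] /andP[s1 s1'].
  move/andP: hxm => [hxm1 hxm2]; move/andP: hxp => [hxp1 hxp2].
  have b1 : lmin 1 <= lmin 1 <= lmax 1 by rewrite lexx (ltW l1).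
  have b2 : lmin 1 <= lmax 1 <= lmax 1 by rewrite lexx (ltW l1).
  case: (Hmono 1%N h1) => M.
    exists (lmin 1), (lmax 1).
    have := M _ _ (lexx _) hxm1 hxm2; have := M _ _ hxp1 hxp2 (lexx _).
    rewrite Dxm Dxp => q1 q2; do 4?split => //; try lra.
    by rewrite /band_len distrC ger0_norm; lra.
  exists (lmax 1), (lmin 1).
  have := M _ _ (lexx _) hxp1 hxp2; have := M _ _ hxm1 hxm2 (lexx _).
  rewrite Dxm Dxp => q1 q2; do 4?split => //; try lra.
  by rewrite /band_len ger0_norm; lra.
have Hex : forall m : nat, exists x : R, (1 <= m <= p)%N ->
      lmin m <= x <= lmax m /\ discriminant a b p x = 2.
  move=> m; case: (boolP (1 <= m <= p)%N) => hm; last by exists 0.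
  have [x hx Dx] := Hsurj m hm 2 ltac:(lra); by exists x.
have [r Hr] := boolp.choice Hex.
pose rr m := if m == 1%N then f else r m.
have Hrr : forall m, (1 <= m <= p)%N -> lmin m <= rr m <= lmax m /\ discriminant a b p (rr m) = 2.
  move=> m hm; rewrite /rr; case: eqP => [->|_]; [by split | exact: Hr].
have rrf : rr 1%N = f by [].
have p1 : (1 <= p)%N by apply: leq_trans p2.
have [sD lD] := @DiscP_size R a b apos p p1.
rewrite -/(DiscP R a b p) -/D prodfV -/P in sD lD.
have b0 : 0 <= band_len lmin lmax 1.
  have h1 : (1 <= 1 <= p)%N by rewrite p1.
  by rewrite /band_len; have := Hlt 1%N h1; lra.
have Hrr' : forall m, (1 <= m <= p)%N -> lmin m <= rr m <= lmax m.
  by move=> m hm; case: (Hrr m hm).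
apply: (le_trans Hmb); rewrite AP.
apply: (@core R p g P (band_len lmin lmax 1) e f D rr p2 g0 P0 sD lD _ rrf ef b0).
- by rewrite -HD De.
- by move=> m hm; rewrite -HD (Hrr m hm).2.
- move=> m m' h1 h2 h3.
  exact: (@sep_aux R lmin lmax p g rr Hlt Hle Hgap Hrr' m m' h1 h2 h3).
- move=> m /andP[h1 h2].
  have := @sep_aux2 R lmin lmax p g rr Hlt Hle Hgap Hrr' 1%N m isT h1 h2.
  by move/andP: he => [_ he2]; lra.
Qed.
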